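(* Let $\Lambda_V$ be a countable vertex space and $\Lambda_E$ an edge space containing a distinguished element $0$ (meaning ''no edge''), and let $\mathcal{G}$ be a countable, projectable space of graphs over $(\Lambda_V,\Lambda_E)$ in which every graph has a finite vertex set. Let $P$ be a probability mass function on $\mathcal{G}$ satisfying the positivity condition: for all $G \in \mathcal{G}$, $P(G) > 0$ implies $P(G') > 0$ for every $G' \in S(G)$. Then $P$ can be written in Gibbs form, i.e. there exist a constant $\psi_0$ and functions $\psi_k : \mathcal{G}^{(k)} \to \mathbb{R} \cup \{-\infty\}$, $k = 1,2,\ldots$, such that for every $G \in \mathcal{G}$, $$P(G) = \exp\Big[\psi_0 + \sum_{G' \in S_1(G)} \psi_1(G') + \sum_{G' \in S_2(G)} \psi_2(G') + \cdots\Big].$$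
   Context: A graph is a pair $G=(V,E)$ with $V \subseteq \Lambda_V$ a (finite) set of vertices and $E : V \times V \to \Lambda_E$ an edge function, with no self loops ($E(v,v)=0$). The graph with no vertices is the empty graph $\emptyset$. For $V' \subseteq V$, the subgraph of $G$ induced by $V'$ is $G(V') = (V', E|_{V' \times V'})$. $S(G) = \{G(V') : V' \subseteq V\}$ is the set of all induced subgraphs of $G$ (including the empty graph), and $S_k(G) = \{G' \in S(G) : |V(G')| = k\}$, where $V(G)$ denotes the vertex set of $G$. A graph space $\mathcal{G}$ is projectable if $G \in \mathcal{G}$ implies $G' \in \mathcal{G}$ for all $G' \in S(G)$. $\mathcal{G}^{(k)} = \{(V,E) \in \mathcal{G} : |V| = k\}$ denotes the graphs of order $k$ in $\mathcal{G}$. The convention $\exp(-\infty)=0$ is used. *)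

(* Defs.v *)
From HB Require Import structures.
From mathcomp Require Import all_boot all_order all_algebra.
From mathcomp Require Import finmap.
From mathcomp Require Import all_classical all_reals all_analysis.
Set Implicit Arguments. Unset Strict Implicit.
 Unset Printing Implicit Defensive.
Import Order.TTheory GRing.Theory Num.Theory.

Record graph (LV : countType) (LE : Type) (e0 : LE) : Type := Graph {
  gV : {fset LV};
  gE : {ffun gV * gV -> LE};
  gE_noloop : forall v : gV, gE (v, v) = e0 }.
Arguments graph : clear implicits.
Arguments Graph {LV LE e0}.

(* graphs carry a (classical) choice structure, needed for summation via esum *)
HB.instance Definition _ (LV : countType) (LE : Type) (e0 : LE) :=
  gen_eqMixin (graph LV LE e0).
HB.instance Definition _ (LV : countType) (LE : Type) (e0 : LE) :=
  gen_choiceMixin (graph LV LE e0).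

Section Induced.
Variables (LV : countType) (LE : Type) (e0 : LE).

Definition incl_sub (A B : {fset LV}) (u : (A `&` B)%fset) : B :=
  [` fsubsetP (fsubsetIr A B) _ (fsvalP u)]%fset.

Definition induced_edges (G : graph LV LE e0) (W : {fset LV}) :
  {ffun (W `&` gV G)%fset * (W `&` gV G)%fset -> LE} :=
  [ffun p => gE G (incl_sub p.1, incl_sub p.2)].

Lemma induced_noloop (G : graph LV LE e0) (W : {fset LV}) v :
  induced_edges G W (v, v) = e0.
Proof. by rewrite ffunE; exact: gE_noloop. Qed.

(* G(W) : the subgraph of G ind_subgraph by W (W is intersected with V(G);
   we only use it with W `<=` V(G)). *)
Definition ind_subgraph (G : graph LV LE e0) (W : {fset LV}) : graph LV LE e0 :=
  Graph (W `&` gV G)%fset (induced_edges G W) (@induced_noloop G W).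

(* S_k(G), listed as the sequence of G(W) for W ⊆ V(G), |W| = k
   (W ↦ G(W) is injective since V(G(W)) = W). *)
Definition Sk (G : graph LV LE e0) (k : nat) : seq (graph LV LE e0) :=
  [seq ind_subgraph G W | W <- enum_fset (fpowerset (gV G)) & #|` W|%fset == k].

Definition projectable (GS : set (graph LV LE e0)) : Prop :=
  forall G, GS G -> forall W : {fset LV}, (W `<=` gV G)%fset -> GS (ind_subgraph G W).
End Induced.

(* Main.v *)
Require Import Defs.
From HB Require Import structures.
From mathcomp Require Import all_boot all_order all_algebra.
From mathcomp Require Import finmap.
From mathcomp Require Import all_classical all_reals all_analysis.
Import Order.TTheory GRing.Theory Num.Theory.
Local Open Scope ring_scope.
Set Implicit Arguments. Unset Strict Implicit.
Lemma graph_ext (LV : countType) (LE : Type) (e0 : LE) (G1 G2 : graph LV LE e0) :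
  gV G1 = gV G2 ->
  (forall (x y : gV G1) (x' y' : gV G2), val x = val x' -> val y = val y' ->
     gE G1 (x, y) = gE G2 (x', y')) -> G1 = G2.
Proof.
case: G1 => V1 E1 h1; case: G2 => V2 E2 h2 /= eV; subst V2 => H.
have eE : E1 = E2 by apply/ffunP => -[x y]; exact: H.
subst E2; congr Graph; exact: Prop_irrelevance.
Qed.

Lemma ind_full (LV : countType) (LE : Type) (e0 : LE) (G : graph LV LE e0) :
  ind_subgraph G (gV G) = G.
Proof.
apply: graph_ext => /=; first exact: fsetIid.
move=> x y x' y' ex ey; rewrite ffunE; congr (gE G (_, _)); apply: val_inj => //.
Qed.

Lemma card_ind (LV : countType) (LE : Type) (e0 : LE) (G : graph LV LE e0) W :
  (W `<=` gV G)%fset -> #|` gV (ind_subgraph G W)|%fset = #|` W|%fset.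
Proof. by move=> /fsetIidPl /= ->. Qed.

Lemma empty_graph_eq (LV : countType) (LE : Type) (e0 : LE) (G1 G2 : graph LV LE e0) :
  gV G1 = fset0 -> gV G2 = fset0 -> G1 = G2.
Proof.
move=> h1 h2; apply: graph_ext; first by rewrite h1 h2.
move=> [x hx]; exfalso; move: hx; by rewrite h1.
Qed.
Fixpoint rf (R : realType) (LV : countType) (LE : Type) (e0 : LE)
  (P : graph LV LE e0 -> R) (c : R) (n : nat) (H : graph LV LE e0) : R :=
  match n with
  | 0 => 0
  | n'.+1 => ln (P H) - c - \sum_(W <- enum_fset (fpowerset (gV H)) |
               (W != fset0) && (W != gV H)) rf P c n' (ind_subgraph H W)
  end.

Arguments rf {R LV LE e0}.

Lemma eq_sum_cond (R : Type) (idx : R) (op : Monoid.com_law idx) (T : eqType) (s : seq T) (p : pred T) (F1 F2 : T -> R) :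
  (forall x, x \in s -> p x -> F1 x = F2 x) ->
  \big[op/idx]_(x <- s | p x) F1 x = \big[op/idx]_(x <- s | p x) F2 x.
Proof. by move=> h; rewrite big_seq_cond [RHS]big_seq_cond; apply: eq_bigr => x /andP[]; exact: h. Qed.

Lemma rf_stable (R : realType) (LV : countType) (LE : Type) (e0 : LE)
  (P : graph LV LE e0 -> R) (c : R) n m H :
  (0 < #|` gV H| <= n)%N -> (#|` gV H| <= m)%N -> rf P c n H = rf P c m H.
Proof.
elim: n m H => [|n IH] [|m] H /andP[h0 hn] hm.
- reflexivity.
- exfalso; move: (leq_trans h0 hn); rewrite ltnn; exact: notF.
- exfalso; move: (leq_trans h0 hm); rewrite ltnn; exact: notF.
rewrite [LHS]/rf -/rf [RHS]/rf -/rf.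
apply: (congr1 (fun s => ln (P H) - c - s)).
apply: eq_sum_cond => W Win /andP[Wn0 WnV].
have sW : (W `<=` gV H)%fset by rewrite -fpowersetE.
have lt : (#|` W| < #|` gV H|)%N.
  by apply: fproper_ltn_card; rewrite fproperEneq WnV sW.
apply: IH; rewrite (card_ind sW).
  by rewrite cardfs_gt0 Wn0 -ltnS (leq_trans lt hn).
by rewrite -ltnS (leq_trans lt hm).
Qed.

Definition r (R : realType) (LV : countType) (LE : Type) (e0 : LE)
  (P : graph LV LE e0 -> R) (c : R) (H : graph LV LE e0) : R :=
  rf P c (#|` gV H|) H.

Lemma r_eq (R : realType) (LV : countType) (LE : Type) (e0 : LE)
  (P : graph LV LE e0 -> R) (c : R) (H : graph LV LE e0) :
  (0 < #|` gV H|)%N ->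
  r P c H = ln (P H) - c - \sum_(W <- enum_fset (fpowerset (gV H)) |
               (W != fset0) && (W != gV H)) r P c (ind_subgraph H W).
Proof.
move=> h0; rewrite /r.
have [n en] : exists n, #|` gV H| = n.+1.
  by exists (#|` gV H|).-1; rewrite prednK.
rewrite en [LHS]/rf -/rf.
apply: (congr1 (fun s => ln (P H) - c - s)).
apply: eq_sum_cond => W Win /andP[Wn0 WnV].
have sW : (W `<=` gV H)%fset by rewrite -fpowersetE.
have lt : (#|` W| < #|` gV H|)%N.
  by apply: fproper_ltn_card; rewrite fproperEneq WnV sW.
apply: rf_stable; rewrite (card_ind sW) //.
by rewrite cardfs_gt0 Wn0 -ltnS -en lt.
Qed.

Lemma sum_card1 (R : realType) (f : R) (m n : nat) :
  \sum_(1 <= k < n.+1) (if m == k then f else 0) = if (0 < m <= n)%N then f else 0.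
Proof.
case: ifP => hm.
  rewrite (bigD1_seq m) ?iota_uniq //=; last by rewrite mem_index_iota ltnS.
  rewrite eqxx big1 ?addr0 // => k /negbTE; by rewrite eq_sym => ->.
rewrite big_seq big1 // => k; rewrite mem_index_iota ltnS => hk.
case: eqP => // ek; by rewrite ek hk in hm.
Qed.

Lemma sum_Ny (R : realType) (T : eqType) (s : seq T) (F : T -> \bar R) x :
  x \in s -> F x = -oo%E -> (\sum_(y <- s) F y)%E = -oo%E.
Proof.
elim: s => // y s IH; rewrite inE big_cons => /orP[/eqP<-|/IH h] Fx.
  by rewrite Fx addNye.
by rewrite h // addeNy.
Qed.

Lemma sum_exchange (R : realType) (LV : countType) (s : seq {fset LV}) (f : {fset LV} -> R) n :
  (forall W, W \in s -> (#|` W| <= n)%N) ->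
  \sum_(1 <= k < n.+1) \sum_(W <- s | #|` W| == k) f W = \sum_(W <- s | W != fset0) f W.
Proof.
move=> hs.
under eq_bigr do rewrite big_mkcond.
rewrite exchange_big /= [RHS]big_mkcond big_seq [RHS]big_seq.
apply: eq_bigr => W Ws; rewrite sum_card1 -cardfs_gt0 hs // andbT //.
Qed.

Theorem theorem2p1 (R : realType) (LV : countType) (LE : Type) (e0 : LE)
    (GS : set (graph LV LE e0)) (P : graph LV LE e0 -> R) :
  countable GS ->
  projectable GS ->
  (forall G, GS G -> (0 <= P G)%R) ->
  (\esum_(G in GS) ((P G)%:E))%E = 1%E ->
  (forall G, GS G -> (0 < P G)%R ->
     forall W : {fset LV}, (W `<=` gV G)%fset -> (0 < P (ind_subgraph G W))%R) ->
  exists (psi0 : R) (psi : nat -> graph LV LE e0 -> \bar R),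
    (forall k G, psi k G != +oo%E) /\
    forall G, GS G ->
      ((P G)%:E = expeR (psi0%:E +
         \sum_(1 <= k < (#|` gV G|%fset).+1) \sum_(G' <- Sk G k) psi k G'))%E.
Proof.
move=> _ _ P0 Psum Ppos.
have [G0 [GS0 PG0]] : exists G0, GS G0 /\ 0 < P G0.
  apply: contrapT => hn.
  have h : (\esum_(G in GS) (P G)%:E)%E = 0%E.
    apply: esum1 => G GSG; have := P0 G GSG; rewrite le_eqVlt => /orP[/eqP<-//|h].
    by exfalso; apply: hn; exists G.
  by move: Psum; rewrite h => -[] /eqP; rewrite eq_sym oner_eq0.
pose E0 := ind_subgraph G0 fset0.
have PE0 : 0 < P E0 by apply: Ppos => //; exact: fsub0set.
have VE0 : gV E0 = fset0 by exact: fset0I.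
pose c := ln (P E0).
pose psi := fun (_ : nat) (H : graph LV LE e0) => if 0 < P H then (r P c H)%:E else -oo%E.
exists c, psi; split.
  by move=> k H; rewrite /psi; case: ifP.
move=> G GSG.
have [n0|npos] := eqVneq #|` gV G| 0%N.
  have VG : gV G = fset0 by apply/eqP; rewrite -cardfs_eq0 n0.
  rewrite (empty_graph_eq VG VE0) -(empty_graph_eq VG VE0) n0 big_geq // adde0.
  by rewrite /expeR lnK ?posrE // (empty_graph_eq VG VE0).
have n1 : (0 < #|` gV G|)%N by rewrite lt0n.
have Vin : gV G \in enum_fset (fpowerset (gV G)) by rewrite fpowersetE fsubset_refl.
case: (boolP (0 < P G)) => hP.
  have hk : forall k, (\sum_(G' <- Sk G k) psi k G')%E =
     (\sum_(W <- enum_fset (fpowerset (gV G)) | #|` W| == k) r P c (ind_subgraph G W))%:E.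
    move=> k; rewrite /Sk big_map big_filter -sumEFin.
    apply: eq_sum_cond => W Win _.
    have sW : (W `<=` gV G)%fset by rewrite -fpowersetE.
    by rewrite /psi (Ppos G GSG hP W sW).
  rewrite (eq_bigr (fun k => (\sum_(W <- enum_fset (fpowerset (gV G)) | #|` W| == k) r P c (ind_subgraph G W))%:E)); last by move=> k _; exact: hk.
  rewrite sumEFin sum_exchange; last first.
    by move=> W; rewrite fpowersetE => sW; apply: fsubset_leq_card.
  have hsum : \sum_(W <- enum_fset (fpowerset (gV G)) | W != fset0) r P c (ind_subgraph G W)
      = ln (P G) - c.
    rewrite big_mkcond (bigD1_seq (gV G)) ?fset_uniq //=.
    rewrite -cardfs_gt0 n1 ind_full -big_mkcondr (r_eq P c n1).
    have -> : \sum_(i <- enum_fset (fpowerset (gV G)) | (i != gV G) && (i != fset0)) r P c (ind_subgraph G i)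
      = \sum_(i <- enum_fset (fpowerset (gV G)) | (i != fset0) && (i != gV G)) r P c (ind_subgraph G i).
      by apply: eq_bigl => W; rewrite andbC.
    by rewrite subrK.
  by rewrite hsum -EFinD /expeR addrC subrK lnK.
have PGz : P G = 0.
  by apply/le_anti; rewrite P0 // andbT leNgt.
have hNy : (\sum_(1 <= k < (#|` gV G|).+1) \sum_(G' <- Sk G k) psi k G')%E = -oo%E.
  apply: (sum_Ny (x := #|` gV G|)); first by rewrite mem_index_iota n1 ltnS leqnn.

  apply: (@sum_Ny _ _ _ _ G); last by rewrite /psi (negbTE hP).
  rewrite /Sk; apply/mapP; exists (gV G); last by rewrite ind_full.
  by rewrite mem_filter eqxx.
by rewrite hNy addeNy PGz.
Qed.
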